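(* Let $p\ge3$ be a prime, let $d\ge2$, let $D$ be a probability distribution on $\mathbb{F}_p$, let $P:\mathbb{F}_p^n\to\mathbb{F}_p$ be a polynomial of degree at most $d$, and let $\{X_1,\dots,X_d\}$ be a partition of $[n]$. Then \[|\mathbb{E}_{x\sim D^n}\omega_p^{P(x)}|^{2^d}\le\mathbb{E}_{x\sim(D-D)^n}\omega_p^{P_{\{X_1,\dots,X_d\}}(x)}.\]
   Context: $\omega_p=\exp(2\pi i/p)$. $D^n$ denotes the product distribution with independent coordinates distributed according to $D$; $D-D$ is the distribution of $u-v$ for independent $u,v\sim D$. Writing $P$ as a linear combination of monomials $a\prod_{u=1}^n x_u^{s_u}$ with $a\ne0$, $P_{\{X_1,\dots,X_d\}}$ is the polynomial obtained by keeping only those monomials such that for each $i\in[d]$ there is $u\in X_i$ with $s_u\ge1$. *)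

(* Defs.v *)
From mathcomp Require Import all_boot all_algebra.
From mathcomp Require Import complex.
From mathcomp Require Import reals trigo.
From mathcomp Require Import mpoly.

Set Implicit Arguments.
Unset Strict Implicit.
Unset Printing Implicit Defensive.
Import GRing.Theory Num.Theory.
Local Open Scope ring_scope.

Definition omega (R : realType) (p : nat) : R[i] :=
  (cos (2 * pi / p%:R) +i* sin (2 * pi / p%:R))%C.

Definition is_distr (R : realType) (T : finType) (D : T -> R) : Prop :=
  (forall t, 0 <= D t) /\ \sum_(t : T) D t = 1.

Definition omega_pow (R : realType) (p : nat) (a : 'F_p) : R[i] :=
  omega R p ^+ (nat_of_ord a).

Definition char_sum (R : realType) (p n : nat) (D : 'F_p -> R)
    (Q : {mpoly 'F_p[n]}) : R[i] :=
  \sum_(x : {ffun 'I_n -> 'F_p})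
    ((\prod_(u < n) D (x u)) %:C)%C * omega_pow R (Q.@[x]).

Definition diff_distr (R : realType) (p : nat) (D : 'F_p -> R) : 'F_p -> R :=
  fun z => \sum_(u : 'F_p) \sum_(v : 'F_p | u - v == z) D u * D v.

(* P_{X_1,...,X_d}: the partition {X_1,...,X_d} of [n] is given by
   part : 'I_n -> 'I_d, with X_i = part^{-1}(i).  Keep the monomials m
   such that every block X_i contains some u with m u >= 1. *)
Definition restrict_poly (K : fieldType) (n d : nat) (part : 'I_n -> 'I_d)
    (P : {mpoly K[n]}) : {mpoly K[n]} :=
  \sum_(m <- msupp P | [forall i : 'I_d, exists u : 'I_n, (part u == i) && (0 < m u)%N])
    P@_m *: 'X_[m].

(* Main.v *)
Require Import Defs.
From mathcomp Require Import all_boot all_algebra.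
From mathcomp Require Import complex.
From mathcomp Require Import reals trigo.
From mathcomp Require Import mpoly.
From mathcomp Require Import ring.
From mathcomp Require Import order.
Set Implicit Arguments. Unset Strict Implicit. Unset Printing Implicit Defensive.
Import Order.TTheory GRing.Theory Num.Theory.
Local Open Scope ring_scope.


Lemma omega_exp (R : realType) (p k : nat) :
  omega R p ^+ k = (cos ((2 * pi / p%:R) *+ k) +i* sin ((2 * pi / p%:R) *+ k))%C.
Proof.
elim: k => [|k IH]; first by rewrite expr0 !mulr0n cos0 sin0.
rewrite exprSr IH /omega; set t := 2 * pi / p%:R.
rewrite mulrSr cosD sinD.
apply/eqP; rewrite eq_complex /=; apply/andP; split; apply/eqP; ring.
Qed.

Lemma omega_p (R : realType) (p : nat) : (0 < p)%N -> omega R p ^+ p = 1.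
Proof.
move=> p0; rewrite omega_exp.
have -> : (2 * pi / p%:R) *+ p = pi *+ 2 :> R.
  rewrite -mulr_natr mulrAC -mulrA divff ?mulr1 ?pnatr_eq0 -?lt0n // mulr_natl //.
by rewrite cos2pi sin2pi.
Qed.

Lemma omega_conj (R : realType) (p : nat) : ((omega R p)^* * omega R p)%C = 1.
Proof.
rewrite /omega /=; set t := 2 * pi / p%:R; apply/eqP; rewrite eq_complex /=; apply/andP; split; apply/eqP.
  by rewrite mulNr opprK -!expr2 cos2Dsin2.
ring.
Qed.


Lemma valFp_add (p : nat) (a b : 'F_p) : prime p -> nat_of_ord (a + b) = ((a + b) %% p)%N.
Proof. by move=> pp; rewrite /= {3}(Fp_cast pp). Qed.

Lemma ep_add (R : realType) (p : nat) (a b : 'F_p) : prime p ->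
  omega_pow R (a + b) = omega_pow R a * omega_pow R b.
Proof.
move=> pp; rewrite /omega_pow valFp_add // expr_mod ?exprD //.
by apply: omega_p; apply: prime_gt0.
Qed.

Lemma ep0 (R : realType) (p : nat) : omega_pow R (0 : 'F_p) = 1.
Proof. by rewrite /omega_pow expr0. Qed.

Lemma ep_conj (R : realType) (p : nat) (a : 'F_p) : prime p ->
  ((omega_pow R a)^*)%C = omega_pow R (- a).
Proof.
move=> pp.
have h1 : omega_pow R a * omega_pow R (- a) = 1 by rewrite -ep_add // subrr ep0.
have h2 : ((omega_pow R a)^*)%C * omega_pow R a = 1.
  by rewrite /omega_pow rmorphXn -exprMn omega_conj expr1n.
have nz : omega_pow R a != 0.
  by apply/eqP=> h; move: h1; rewrite h mul0r => /eqP; rewrite eq_sym oner_eq0.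
apply: (mulIf nz); rewrite h2 mulrC h1 //.
Qed.


Definition mu (R : realType) (p n : nat) (D : 'F_p -> R) (x : {ffun 'I_n -> 'F_p}) : R[i] :=
  ((\prod_(u < n) D (x u))%:C)%C.

Definition mix (p n : nat) (S : 'I_n -> bool) (y z : {ffun 'I_n -> 'F_p}) : {ffun 'I_n -> 'F_p} :=
  [ffun u => if S u then y u else z u].

Lemma mu_ge0 (R : realType) (p n : nat) (D : 'F_p -> R) (x : {ffun 'I_n -> 'F_p}) : is_distr D -> 0 <= mu D x :> R[i].
Proof.
by case=> D0 _; rewrite /mu ler0c; apply: prodr_ge0 => u _; apply: D0.
Qed.

Lemma mu_sum (R : realType) (p n : nat) (D : 'F_p -> R) : is_distr D ->
  \sum_(x : {ffun 'I_n -> 'F_p}) mu D x = 1.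
Proof.
case=> _ D1; rewrite /mu -rmorph_sum /=.
rewrite -(bigA_distr_bigA (fun (u : 'I_n) (t : 'F_p) => D t)) /=.
by rewrite D1 big1 // => u _.
Qed.

Lemma mix_mu (R : realType) (p n : nat) (D : 'F_p -> R) S (y z : {ffun 'I_n -> 'F_p}) :
  mu D (mix S y z) * mu D (mix S z y) = mu D y * mu D z.
Proof.
rewrite /mu -!rmorphM /= -!big_split /=; congr (_%:C)%C.
by apply: eq_bigr => u _; rewrite !ffunE; case: (S u) => //; rewrite mulrC.
Qed.

Lemma mixing (R : realType) (p n : nat) (D : 'F_p -> R) S (f : {ffun 'I_n -> 'F_p} -> R[i]) :
  is_distr D ->
  \sum_y \sum_z mu D y * mu D z * f (mix S y z) = \sum_x mu D x * f x.
Proof.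
move=> hD.
rewrite pair_bigA /=.
pose phi := fun w : {ffun 'I_n -> 'F_p} * {ffun 'I_n -> 'F_p} => (mix S w.1 w.2, mix S w.2 w.1).
have phiK : involutive phi.
  move=> [y z]; rewrite /phi /=; congr pair; apply/ffunP => u; rewrite !ffunE;
  by case: (S u).
rewrite (reindex_inj (inv_inj phiK)) /=.
have -> : \sum_(w : {ffun 'I_n -> 'F_p} * {ffun 'I_n -> 'F_p}) mu D (phi w).1 * mu D (phi w).2 * f (mix S (phi w).1 (phi w).2)
   = \sum_(w : {ffun 'I_n -> 'F_p} * {ffun 'I_n -> 'F_p}) mu D w.1 * mu D w.2 * f w.1.
  apply: eq_bigr => -[y z] _ /=; rewrite mix_mu; congr (_ * f _).
  by apply/ffunP => u; rewrite !ffunE; case: (S u).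
rewrite -(pair_bigA _ (fun y z => mu D y * mu D z * f y)) /=.
apply: eq_bigr => y _.
under eq_bigr => z _ do rewrite mulrAC.
by rewrite -big_distrr /= mu_sum // mulr1.
Qed.


Lemma cs (C : numDomainType) (I : finType) (w b : I -> C) :
  (forall i, 0 <= w i) -> \sum_i w i = 1 -> (forall i, 0 <= b i) ->
  (\sum_i w i * b i) ^+ 2 <= \sum_i w i * b i ^+ 2.
Proof.
move=> w0 w1 b0.
set m := \sum_i w i * b i.
have m0 : 0 <= m by apply: sumr_ge0 => i _; apply: mulr_ge0.
have H : 0 <= \sum_i w i * (b i - m) ^+ 2.
  apply: sumr_ge0 => i _; apply: mulr_ge0 => //.
  by rewrite -real_normK ?exprn_ge0 ?normr_ge0 // realB // ger0_real.
have E : \sum_i w i * (b i - m) ^+ 2 =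
         \sum_i w i * b i ^+ 2 - (m *+ 2) * m + m ^+ 2 * \sum_i w i.
  rewrite !big_distrr /= -sumrB -big_split /=; apply: eq_bigr => i _.
  rewrite /m; set s := \sum_(j <- _) _; ring.
by rewrite -subr_ge0; move: H; rewrite E w1 mulr1; congr (_ <= _); ring.
Qed.


Definition blk (p n d : nat) (part : 'I_n -> 'I_d) (m : 'X_{1..n}) (i : nat)
  (y : {ffun 'I_n -> 'F_p}) : 'F_p :=
  \prod_(u | part u == i :> nat) y u ^+ m u.

Definition Fj (p n d : nat) (part : 'I_n -> 'I_d) (P : {mpoly 'F_p[n]}) (j : nat)
  (X X' z : {ffun 'I_n -> 'F_p}) : 'F_p :=
  \sum_(m <- msupp P) P@_m * (\prod_(i < d | (i < j)%N) (blk part m i X - blk part m i X'))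
     * \prod_(u | (j <= part u)%N) z u ^+ m u.

Definition Sj (n d : nat) (part : 'I_n -> 'I_d) (j : nat) : 'I_n -> bool :=
  fun u => part u == j :> nat.

Lemma F0 (p n d : nat) (part : 'I_n -> 'I_d) (P : {mpoly 'F_p[n]}) X X' z :
  Fj part P 0 X X' z = P.@[z].
Proof.
rewrite /Fj mevalE; apply: eq_bigr => m _.
by rewrite [\prod_(i < d | _) _]big_pred0 // mulr1; congr (_ * _).
Qed.

Lemma blk_mix (p n d : nat) (part : 'I_n -> 'I_d) m (i j : nat) (y X : {ffun 'I_n -> 'F_p}) :
  blk part m i (mix (Sj part j) y X) = if i == j then blk part m i y else blk part m i X.
Proof.
rewrite /blk; case: eqP => [->|ne]; apply: eq_bigr => u /eqP pu; rewrite ffunE /Sj pu.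
  by rewrite eqxx.
by case: eqP.
Qed.

Lemma Fstep (p n d : nat) (part : 'I_n -> 'I_d) (P : {mpoly 'F_p[n]}) (j : nat)
  (X X' y y' z : {ffun 'I_n -> 'F_p}) : (j < d)%N ->
  Fj part P j X X' (mix (Sj part j) y z) - Fj part P j X X' (mix (Sj part j) y' z)
  = Fj part P j.+1 (mix (Sj part j) y X) (mix (Sj part j) y' X') z.
Proof.
move=> jd; rewrite /Fj -sumrB; apply: eq_bigr => m _.
have split_z : forall w : {ffun 'I_n -> 'F_p},
    \prod_(u | (j <= part u)%N) (mix (Sj part j) w z) u ^+ m u
    = blk part m j w * \prod_(u | (j < part u)%N) z u ^+ m u.
  move=> w; rewrite (bigID (fun u => part u == j :> nat)) /=; congr (_ * _).
    apply: eq_big => u; first by case: eqP => [->|]; rewrite ?leqnn ?andbT ?andbF.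
    by move=> /andP[_ pu]; rewrite ffunE /Sj pu.
  apply: eq_big => u; first by rewrite ltn_neqAle andbC eq_sym.
  by move=> /andP[_ pu]; rewrite ffunE /Sj (negbTE pu).
rewrite !split_z.
pose i0 : 'I_d := Ordinal jd.
rewrite [in RHS](bigD1 i0) //= !blk_mix eqxx.
have -> : \prod_(i < d | (i < j.+1)%N && (i != i0))
            (blk part m i (mix (Sj part j) y X) - blk part m i (mix (Sj part j) y' X'))
          = \prod_(i < d | (i < j)%N) (blk part m i X - blk part m i X').
  apply: eq_big => i.
    rewrite ltnS leq_eqVlt -val_eqE /=; case: (ltngtP i j) => //.
  move=> /andP[_ ne]; rewrite !blk_mix.
  by have -> : (i == j :> nat) = false by apply/negbTE; rewrite -val_eqE /= in ne.
ring.
Qed.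


Lemma count_ones (d : nat) (s : 'I_d -> nat) :
  (forall i, 1 <= s i)%N -> (\sum_i s i <= d)%N -> forall i, s i = 1%N.
Proof.
move=> s1 sd.
have E : (\sum_i (s i - 1) + \sum_(i < d) 1 = \sum_i s i)%N.
  rewrite -big_split /=.
  by apply: eq_bigr => i _; rewrite subnK.
rewrite sum1_card card_ord in E.
have : (\sum_i (s i - 1) == 0)%N by rewrite -E in sd; rewrite -(leqn0); rewrite -(leq_add2r d) add0n.
rewrite sum_nat_eq0 => /forallP H i.
by have := H i; have := s1 i; rewrite /= subn_eq0 => a b; apply/eqP; rewrite eqn_leq a b.
Qed.

Lemma single (K : comNzRingType) (n : nat) (P : pred 'I_n) (m : 'X_{1..n}) :
  (\sum_(u | P u) m u = 1)%N ->
  exists u0, forall g : 'I_n -> K, \prod_(u | P u) g u ^+ m u = g u0.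
Proof.
move=> s1.
have [u0 /andP[Pu0 mu0]|H] := pickP (fun u => P u && (0 < m u)%N); last first.
  move: s1; rewrite big1 // => u Pu; have := H u; rewrite Pu /= lt0n => /negbFE/eqP.
  by [].
exists u0 => g.
move: s1; rewrite (bigD1 u0) //= => s1.
have m1 : m u0 = 1%N by move: s1 mu0; case: (m u0) => [|[|k]] //=; rewrite addSn.
have r0 : (\sum_(u | P u && (u != u0)) m u = 0)%N by move: s1; rewrite m1 add1n => -[].
rewrite (bigD1 u0) //= m1 expr1 big1 ?mulr1 // => u /andP[Pu ne].
move/eqP: r0; rewrite sum_nat_eq0 => /forallP/(_ u); rewrite Pu ne /= => /eqP ->.
by rewrite expr0.
Qed.

Lemma Fd (p n d : nat) (part : 'I_n -> 'I_d) (P : {mpoly 'F_p[n]})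
  (X X' z : {ffun 'I_n -> 'F_p}) : (msize P <= d.+1)%N ->
  Fj part P d X X' z = (restrict_poly part P).@[ [ffun u => X u - X' u] ].
Proof.
move=> hs; rewrite /restrict_poly raddf_sum /= big_mkcond /= /Fj.
rewrite big_seq [in RHS]big_seq; apply: eq_bigr => m mP.
have h1 : \prod_(u | (d <= part u)%N) z u ^+ m u = 1.
  by rewrite big_pred0 // => u; rewrite leqNgt ltn_ord.
have h2 : \prod_(i < d | (i < d)%N) (blk part m i X - blk part m i X')
          = \prod_(i < d) (blk part m i X - blk part m i X').
  by apply: eq_bigl => i; rewrite ltn_ord.
rewrite h1 h2 mulr1; case: ifP => c.
  rewrite mevalZ mevalX; congr (_ * _).
  rewrite (partition_big part xpredT) //=.
  pose s := fun i : 'I_d => (\sum_(u | part u == i) m u)%N.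
  have s1 : forall i, (1 <= s i)%N.
    move=> i; have /existsP[u /andP[pu mu]] := forallP c i.
    by rewrite /s (bigD1 u) //= (leq_trans mu) ?leq_addr.
  have sd : (\sum_i s i <= d)%N.
    have -> : (\sum_i s i = \sum_u m u)%N.
      by rewrite (partition_big part xpredT) //=.
    rewrite -mdegE -ltnS.
    exact: leq_trans (msize_mdeg_lt mP) hs.
  apply: eq_bigr => i _.
  have [u0 Hu0] := single 'F_p (count_ones s1 sd i).
  rewrite Hu0 ffunE /blk.
  have E : forall Y : {ffun 'I_n -> 'F_p}, \prod_(u | part u == i :> nat) Y u ^+ m u = Y u0.
    by move=> Y; rewrite -(Hu0 Y); apply: eq_bigl => u.
  by rewrite !E.
have [i Hi] : exists i : 'I_d, ~~ [exists u, (part u == i) && (0 < m u)%N].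
  by apply/existsP; rewrite -negb_forall c.
have H : forall u, ~~ ((part u == i) && (0 < m u)%N).
  by move=> u; apply: contra Hi => h; apply/existsP; exists u.
have b1 : forall Y : {ffun 'I_n -> 'F_p}, blk part m i Y = 1.
  move=> Y; rewrite /blk big1 // => u /eqP pu.
  have pu' : part u == i by rewrite -val_eqE /= pu.
  have := H u; rewrite pu' /= -eqn0Ngt => /eqP ->.
  by rewrite expr0.
by rewrite (bigD1 i) //= !b1 subrr mul0r mulr0.
Qed.


Lemma double_mixing (R : realType) (p n : nat) (D : 'F_p -> R) S
  (H : {ffun 'I_n -> 'F_p} -> {ffun 'I_n -> 'F_p} -> R[i]) : is_distr D ->
  \sum_X \sum_X' mu D X * mu D X' *
     (\sum_y \sum_y' mu D y * mu D y' * H (mix S y X) (mix S y' X'))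
  = \sum_X \sum_X' mu D X * mu D X' * H X X'.
Proof.
move=> hD.
have E1 : \sum_X \sum_X' mu D X * mu D X' * H X X'
    = \sum_X mu D X * (\sum_y' \sum_X' mu D y' * mu D X' * H X (mix S y' X')).
  apply: eq_bigr => X _; rewrite (mixing S (H X) hD) big_distrr /=.
  by apply: eq_bigr => X' _; rewrite mulrA.
rewrite E1 -(mixing S (fun W => \sum_y' \sum_X' mu D y' * mu D X' * H W (mix S y' X')) hD) /=.
rewrite [in RHS]exchange_big /=; apply: eq_bigr => X _.
under eq_bigr => X' _ do (rewrite big_distrr /=; under eq_bigr => y _ do rewrite big_distrr /=).
under [in RHS]eq_bigr => y _ do (rewrite big_distrr /=; under eq_bigr => y' _ do rewrite big_distrr /=).
rewrite exchange_big /=; apply: eq_bigr => y _.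
rewrite exchange_big /=; apply: eq_bigr => y' _.
apply: eq_bigr => X' _; ring.
Qed.

Lemma diff_distrE (R : realType) (p : nat) (D : 'F_p -> R) (c : 'F_p) :
  diff_distr D c = \sum_a D a * D (a - c).
Proof.
rewrite /diff_distr; apply: eq_bigr => a _.
rewrite (big_pred1 (a - c)) // => b /=.
by apply/idP/idP => /eqP h; apply/eqP; subst; ring.
Qed.

Lemma diff_sum (R : realType) (p n : nat) (D : 'F_p -> R)
  (h : {ffun 'I_n -> 'F_p} -> R[i]) :
  \sum_X \sum_X' mu D X * mu D X' * h [ffun u => X u - X' u]
  = \sum_(z : {ffun 'I_n -> 'F_p}) ((\prod_(u < n) diff_distr D (z u))%:C)%C * h z.
Proof.
have phiK : forall X : {ffun 'I_n -> 'F_p},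
    involutive (fun Z : {ffun 'I_n -> 'F_p} => [ffun u => X u - Z u]).
  by move=> X Z; apply/ffunP => u; rewrite !ffunE opprB addrC subrK.
under eq_bigr => X _ do rewrite (reindex_inj (inv_inj (phiK X))) /=.
rewrite exchange_big /=; apply: eq_bigr => Z _.
have hZ : forall X : {ffun 'I_n -> 'F_p}, [ffun u => X u - [ffun u0 => X u0 - Z u0] u] = Z.
  by move=> X; apply/ffunP => u; rewrite !ffunE opprB addrC subrK.
under eq_bigr => X _ do rewrite hZ.
rewrite -big_distrl /=; congr (_ * _).
rewrite /mu; under eq_bigr => X _ do rewrite -rmorphM.
rewrite -rmorph_sum /=; congr (_%:C)%C.
under eq_bigr => X _ do rewrite -big_split /=.
under eq_bigr => X _ do under eq_bigr => u _ do rewrite ffunE.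
rewrite -(bigA_distr_bigA (fun (u : 'I_n) (a : 'F_p) => D a * D (a - Z u))) /=.
by apply: eq_bigr => u _; rewrite diff_distrE.
Qed.


Definition Tj (R : realType) (p n d : nat) (D : 'F_p -> R) (part : 'I_n -> 'I_d)
  (P : {mpoly 'F_p[n]}) (j : nat) : R[i] :=
  \sum_X \sum_X' mu D X * mu D X' *
    \sum_(z : {ffun 'I_n -> 'F_p}) mu D z * omega_pow R (Fj part P j X X' z).

Lemma T0 (R : realType) (p n d : nat) (D : 'F_p -> R) (part : 'I_n -> 'I_d)
  (P : {mpoly 'F_p[n]}) : is_distr D -> Tj D part P 0 = char_sum D P.
Proof.
move=> hD; rewrite /Tj.
under eq_bigr => X _ do under eq_bigr => X' _ do
  (rewrite (_ : \sum_z _ = char_sum D P); last by apply: eq_bigr => z _; rewrite F0).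
under eq_bigr => X _ do rewrite -big_distrl /= -big_distrr /= mu_sum // mulr1.
by rewrite -big_distrl /= mu_sum // mul1r.
Qed.

Lemma Td (R : realType) (p n d : nat) (D : 'F_p -> R) (part : 'I_n -> 'I_d)
  (P : {mpoly 'F_p[n]}) : is_distr D -> (msize P <= d.+1)%N ->
  Tj D part P d = char_sum (diff_distr D) (restrict_poly part P).
Proof.
move=> hD hs; rewrite /Tj.
under eq_bigr => X _ do under eq_bigr => X' _ do
  (rewrite (_ : \sum_z _ = omega_pow R ((restrict_poly part P).@[ [ffun u => X u - X' u] ]));
   last by under eq_bigr => z _ do rewrite Fd //; rewrite -big_distrl /= mu_sum // mul1r).
exact: (diff_sum D (fun v => omega_pow R ((restrict_poly part P).@[v]))).
Qed.

Lemma conj_sum (R : realType) (I : finType) (F : I -> R[i]) :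
  ((\sum_i F i)^*)%C = \sum_i ((F i)^*)%C.
Proof. exact: raddf_sum. Qed.

Lemma conjM (R : realType) (x y : R[i]) : ((x * y)^*)%C = ((x^*)%C * (y^*)%C).
Proof. exact: rmorphM. Qed.

Lemma normA2 (R : realType) (p n : nat) (D : 'F_p -> R) (f : {ffun 'I_n -> 'F_p} -> 'F_p) :
  prime p ->
  `| \sum_y mu D y * omega_pow R (f y) | ^+ 2
  = \sum_y \sum_y' mu D y * mu D y' * omega_pow R (f y - f y').
Proof.
move=> pp; rewrite sqr_normc conj_sum big_distrl; apply: eq_bigr => y _.
rewrite big_distrr; apply: eq_bigr => y' _.
have cm : ((mu D y')^*)%C = mu D y' by rewrite /mu conjc_real.
rewrite conjM cm ep_conj // [in RHS]ep_add //=; ring.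
Qed.

Lemma Tstep (R : realType) (p n d : nat) (D : 'F_p -> R) (part : 'I_n -> 'I_d)
  (P : {mpoly 'F_p[n]}) (j : nat) : prime p -> is_distr D -> (j < d)%N ->
  `|Tj D part P j| ^+ 2 <= Tj D part P j.+1.
Proof.
move=> pp hD jd.
set S := Sj part j.
pose A X X' z := \sum_y mu D y * omega_pow R (Fj part P j X X' (mix S y z)).
pose B X X' := \sum_(z : {ffun 'I_n -> 'F_p}) mu D z * omega_pow R (Fj part P j X X' z).
have m0 : forall x : {ffun 'I_n -> 'F_p}, 0 <= mu D x by move=> x; apply: mu_ge0.
have hB : forall X X', B X X' = \sum_z mu D z * A X X' z.
  move=> X X'; rewrite /B -(mixing S (fun x => omega_pow R (Fj part P j X X' x)) hD) /A.
  rewrite exchange_big /=; apply: eq_bigr => z _; rewrite big_distrr /=.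
  by apply: eq_bigr => y _; ring.
have RHS : Tj D part P j.+1 =
    \sum_X mu D X * (\sum_X' mu D X' * (\sum_z mu D z * `|A X X' z| ^+ 2)).
  rewrite /Tj -(double_mixing S (fun W W' => \sum_(z : {ffun 'I_n -> 'F_p}) mu D z *
      omega_pow R (Fj part P j.+1 W W' z)) hD).
  apply: eq_bigr => X _; rewrite big_distrr /=; apply: eq_bigr => X' _.
  rewrite mulrA; congr (_ * _).
  have nA : forall z, `|A X X' z| ^+ 2 = \sum_y \sum_y' mu D y * mu D y' *
      omega_pow R (Fj part P j X X' (mix S y z) - Fj part P j X X' (mix S y' z)).
    by move=> z; exact: (normA2 D (fun y => Fj part P j X X' (mix S y z)) pp).
  under [in RHS]eq_bigr => z _ do rewrite nA.
  under [in RHS]eq_bigr => z _ do under eq_bigr => y _ do under eq_bigr => y' _ do rewrite Fstep //.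
  under [in RHS]eq_bigr => z _ do (rewrite big_distrr /=; under eq_bigr => y _ do rewrite big_distrr /=).
  symmetry.
  rewrite exchange_big /=; apply: eq_bigr => y _.
  rewrite exchange_big /=; apply: eq_bigr => y' _.
  rewrite big_distrr /=; apply: eq_bigr => z _; ring.
rewrite RHS.
pose h X := \sum_X' mu D X' * `|B X X'|.
have h0 : forall X, 0 <= h X.
  by move=> X; apply: sumr_ge0 => X' _; apply: mulr_ge0.
have s1 : `|Tj D part P j| <= \sum_X mu D X * h X.
  rewrite /Tj; apply: le_trans (ler_norm_sum _ _ _) _; apply: ler_sum => X _.
  rewrite /h big_distrr /=; apply: le_trans (ler_norm_sum _ _ _) _; apply: ler_sum => X' _.
  by rewrite !normrM (ger0_norm (m0 X)) (ger0_norm (m0 X')) mulrA.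
have s2 : `|Tj D part P j| ^+ 2 <= (\sum_X mu D X * h X) ^+ 2.
  by apply: lerXn2r; rewrite ?nnegrE //; apply: sumr_ge0 => X _; apply: mulr_ge0.
apply: (le_trans s2). apply: (le_trans (cs m0 (mu_sum _ hD) h0)).
apply: ler_sum => X _; apply: ler_wpM2l => //.
apply: (le_trans (cs m0 (mu_sum _ hD) (fun X' => normr_ge0 (B X X')))).
apply: ler_sum => X' _; apply: ler_wpM2l => //.
have b1 : `|B X X'| <= \sum_z mu D z * `|A X X' z|.
  rewrite hB; apply: le_trans (ler_norm_sum _ _ _) _; apply: ler_sum => z _.
  by rewrite normrM ger0_norm.
apply: le_trans (cs m0 (mu_sum _ hD) (fun z => normr_ge0 (A X X' z))).
apply: lerXn2r; rewrite ?nnegrE //; apply: sumr_ge0 => z _; apply: mulr_ge0 => //.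
Qed.


Lemma chain (R : realType) (p n d : nat) (D : 'F_p -> R) (part : 'I_n -> 'I_d)
  (P : {mpoly 'F_p[n]}) (j : nat) : prime p -> is_distr D -> (j <= d)%N ->
  `|char_sum D P| ^+ (2 ^ j) <= `|Tj D part P j|.
Proof.
move=> pp hD; elim: j => [|j IH] jd.
  by rewrite expn0 expr1 T0.
have jd' : (j < d)%N by [].
have st := Tstep part P pp hD jd'.
have t0 : 0 <= Tj D part P j.+1 by apply: le_trans st; apply: exprn_ge0.
rewrite (ger0_norm t0) expnSr exprM; apply: le_trans st.
by apply: lerXn2r; rewrite ?nnegrE ?exprn_ge0 ?normr_ge0 // IH // ltnW.
Qed.

Theorem proposition3p7 (R : realType) (p d n : nat) (D : 'F_p -> R)
    (P : {mpoly 'F_p[n]}) (part : 'I_n -> 'I_d) :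
  prime p -> (3 <= p)%N -> (2 <= d)%N ->
  is_distr D ->
  (msize P <= d.+1)%N ->
  (forall i : 'I_d, exists u : 'I_n, part u = i) ->
  `| char_sum D P | ^+ (2 ^ d) <=
    char_sum (diff_distr D) (restrict_poly part P).
Proof.
move=> pp _ d2 hD hs _.
rewrite -Td //.
case: d part P hs d2 => [|d'] part P hs d2 //.
have st := Tstep part P pp hD (ltnSn d').
rewrite expnSr exprM; apply: le_trans st.
by apply: lerXn2r; rewrite ?nnegrE ?exprn_ge0 ?normr_ge0 // chain.
Qed.
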